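(* Let $G$ be a graph such that $D_2(G)$ is connected. Then $\mathrm{diam}(D_2(G))\geqslant \left\lceil \tfrac{1}{2}\mathrm{diam}(G)\right\rceil$.
   Context: All graphs are finite, simple and undirected. For a graph $G$, $\mathrm{d}_G(x,y)$ denotes the length of a shortest path between $x$ and $y$, and $\mathrm{diam}(G)$ is the maximum distance between vertices of $G$. The $2$-distance graph $D_2(G)$ of $G$ is the graph with vertex set $V(G)$ in which two vertices $x,y$ are adjacent if and only if $\mathrm{d}_G(x,y)=2$. *)

(* Defs.v *)
From mathcomp Require Import all_boot.
Set Implicit Arguments. Unset Strict Implicit. Unset Printing Implicit Defensive.

Section Graphs.
Variable T : finType.

Definition simple_graph (e : rel T) : Prop := symmetric e /\ irreflexive e.

Fixpoint walkb (e : rel T) (n : nat) (x y : T) : bool :=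
  match n with
  | 0 => x == y
  | n'.+1 => [exists z, e x z && walkb e n' z y]
  end.

Definition dist_eq (e : rel T) (x y : T) (k : nat) : bool :=
  walkb e k x y && [forall m : 'I_k, ~~ walkb e m x y].

Definition connected (e : rel T) : Prop :=
  forall x y : T, exists n, walkb e n x y.

Definition is_diam (e : rel T) (D : nat) : Prop :=
  (exists x y, dist_eq e x y D) /\ (forall x y k, dist_eq e x y k -> k <= D).

Definition D2 (e : rel T) : rel T := fun x y => dist_eq e x y 2.

End Graphs.

(* Main.v *)
Require Import Defs.
From mathcomp Require Import all_boot.

Lemma walk_cat (T : finType) (e : rel T) a b (x y z : T) :
  walkb e a x y -> walkb e b y z -> walkb e (a + b) x z.
Proof.
elim: a x => [|a IH] x /=.
  by move/eqP=> ->.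
move=> /existsP [w /andP [exw hw]] hb.
apply/existsP; exists w; rewrite exw /=; exact: IH hw hb.
Qed.

Lemma walkD2 (T : finType) (e : rel T) n (x y : T) :
  walkb (D2 e) n x y -> walkb e (n.*2) x y.
Proof.
elim: n x => [|n IH] x /=; first by [].
move=> /existsP [w /andP [hxw hw]].
have h2 : walkb e 2 x w by move: hxw; rewrite /D2 /dist_eq => /andP [].
have := @walk_cat _ _ _ _ _ _ _ h2 (IH _ hw).
by [].
Qed.

Theorem theorem2p5 (T : finType) (e : rel T) (dG dD : nat) :
  simple_graph e ->
  connected (D2 e) ->
  is_diam e dG ->
  is_diam (D2 e) dD ->
  uphalf dG <= dD.
Proof.
move=> _ hc [[x [y hxy]] _] [_ hD].
have ex : exists n, walkb (D2 e) n x y by exact: hc.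
case: (ex_minnP ex) => n hn hmin.
have hd : dist_eq (D2 e) x y n.
  rewrite /dist_eq hn /=; apply/forallP => m; apply/negP => hm.
  by have := hmin _ hm; rewrite leqNgt ltn_ord.
have le1 := hD _ _ _ hd.
have hw := @walkD2 _ _ _ _ _ hn.
have hge : dG <= n.*2.
  rewrite leqNgt; apply/negP => lt.
  move: hxy; rewrite /dist_eq => /andP [_ /forallP /(_ (Ordinal lt))].
  by rewrite /= hw.
apply: leq_trans le1.
by rewrite leq_uphalf_double.
Qed.
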